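(* Let voters (and their proposals) be points of $[0,1]$, distributed according to the uniform distribution, with density $f(x)=1$ on $[0,1]$. Each voter prefers, between two proposals, the one closer to its own position. Consider one round of Triadic voting: three voters $X_1,X_2,X_3$ are drawn independently from the uniform distribution on $[0,1]$. Each voter votes for whichever of the other two proposals is closer to it, and the proposal receiving the most votes wins. Let $g_{\text{Triadic}}(x)$ denote the probability density of the winning proposal's position. Consider one round of Hot-or-Not voting: two candidate proposals $X, Y$ and one voter $Z$ are drawn independently from the uniform distribution on $[0,1]$. The voter $Z$ votes for whichever of $X,Y$ is closer to $Z$, and that proposal wins. Let $g_{\text{Hot-or-Not}}(x)$ denote the probability density of the winning proposal's position. Then, for $x\in[0,1]$, \[ g_{\text{Triadic}}(x)=6x(1-x), \qquad g_{\text{Hot-or-Not}}(x)=3x(1-x)+\tfrac12 . \] In particular, \[ g_{\text{Hot-or-Not}}(x)=\tfrac12 g_{\text{Triadic}}(x)+\tfrac12 f(x). \]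
   Context: This is a one-dimensional (single-peaked) model of proposals: each voter's opinion is a real number in $[0,1]$, and each voter's proposal is that same number. A voter at position $z$ prefers proposal $a$ to proposal $b$ if $|z-a|<|z-b|$. Ties occur with probability zero. *)

(* Defs.v *)
From HB Require Import structures.
From mathcomp Require Import all_boot all_order all_algebra.
From mathcomp Require Import all_classical all_reals all_analysis.
Set Implicit Arguments. Unset Strict Implicit. Unset Printing Implicit Defensive.
Import Order.TTheory GRing.Theory Num.Theory.
Local Open Scope classical_set_scope.
Local Open Scope ring_scope.

Section Voting.
Variable R : realType.

Definition unif01 := uniform_prob (@ltr01 R).

Definition unif3 := ((unif01 \x unif01) \x unif01)%E.

(** Each voter votes for whichever
    of the other two proposals is closer to it (ties, which have probability
    zero, are resolved in favour of the lower index).  The proposal with the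
    most votes wins (ties in vote counts resolved in favour of the lower index;
    with no distance ties they never occur). *)
Definition triadic_winner (p : R * R * R) : R :=
  let: (x1, x2, x3) := p in
  let v1_for2 := `|x1 - x2| <= `|x1 - x3| in
  let v2_for1 := `|x2 - x1| <= `|x2 - x3| in
  let v3_for1 := `|x3 - x1| <= `|x3 - x2| in
  let n1 := (v2_for1 : nat) + (v3_for1 : nat) in
  let n2 := (v1_for2 : nat) + (~~ v3_for1 : nat) in
  let n3 := (~~ v1_for2 : nat) + (~~ v2_for1 : nat) in
  if ((n2 <= n1)%N && (n3 <= n1)%N) then x1
  else if (n3 <= n2)%N then x2 else x3.

(** Hot-or-Not voting: candidates x, y and voter z; z votes for the closer
    candidate, which wins (tie, of probability zero, resolved in favour of x). *)
Definition hotornot_winner (p : R * R * R) : R :=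
  let: (x, y, z) := p in
  if `|z - x| <= `|z - y| then x else y.

End Voting.

(* Main.v *)
Require Import Defs.
From HB Require Import structures.
From mathcomp Require Import all_boot all_order all_algebra.
From mathcomp Require Import all_classical all_reals all_analysis.
From mathcomp Require Import measurable_realfun.
From mathcomp Require Import lra ring.
Import Order.TTheory GRing.Theory Num.Theory.
Import numFieldNormedType.Exports.
Local Open Scope classical_set_scope.
Local Open Scope ring_scope.

Section S.
Variable R : realType.
Local Notation mu := (@lebesgue_measure R).

Lemma ftc_poly (p : {poly R}) (a b : R) : a < b ->
  (\int[mu]_(x in `[a, b]) (p^`().[x])%:E = (p.[b] - p.[a])%:E)%E.
Proof.
move=> ab; rewrite EFinB.
apply: (@continuous_FTC2 _ (horner p^`()) (horner p)) => //.
- by apply/continuous_subspaceT => ?; exact: continuous_horner.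
- split.
  + by move=> x _; exact: derivable_horner.
  + by apply: cvg_at_right_filter; exact: continuous_horner.
  + by apply: cvg_at_left_filter; exact: continuous_horner.
- by move=> x _; rewrite derivE.
Qed.


Section dens.
Variable g : R -> R.
Definition dens (_ : measurable_fun setT g) (_ : forall x, 0 <= x <= 1 -> 0 <= g x)
  (A : set R) : \bar R :=
  (\int[mu]_(x in A `&` `[0%R, 1%R]) (g x)%:E)%E.
Variable mg : measurable_fun setT g.
Variable g0 : forall x, 0 <= x <= 1 -> 0 <= g x.

Let dens0 : dens mg g0 set0 = 0%E.
Proof. by rewrite /dens set0I integral_set0. Qed.

Let dens_ge0 A : (0 <= dens mg g0 A)%E.
Proof.
apply: integral_ge0 => x [_]; rewrite /= in_itv /= => h.
by rewrite lee_fin g0.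
Qed.

Let dens_sigma_additive : semi_sigma_additive (dens mg g0).
Proof.
move=> /= F mF tF mUF; rewrite /dens; apply: cvg_toP.
  apply: ereal_nondecreasing_is_cvgn => m n mn.
  apply: lee_sum_nneg_natr => // k _ _.
  apply: integral_ge0 => x [_]; rewrite /= in_itv /= => h.
  by rewrite lee_fin g0.
rewrite setI_bigcupl ge0_integral_bigcup//=.
- by move=> k; apply: measurableI; [exact: mF|exact: measurable_itv].
- by apply/measurable_EFinP; apply: measurable_funTS.
- by move=> x [k _ [_]]; rewrite /= in_itv /= => h; rewrite lee_fin g0.
- by move=> i j _ _ [x [[? _] [? _]]]; apply: tF => //; exists x.
Qed.

HB.instance Definition _ := isMeasure.Build _ _ _ (dens mg g0)
  dens0 dens_ge0 dens_sigma_additive.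
End dens.

Lemma ray_ext (m : {measure set R -> \bar R}) (F : R -> R) :
  m setT = 1%E -> F 0 = 0 -> F 1 = 1 ->
  (forall t, 0 <= t <= 1 -> m `]-oo, t]%classic = (F t)%:E) ->
  forall t, m `]-oo, t]%classic = (if t < 0 then 0 else if t <= 1 then F t else 1)%:E.
Proof.
move=> mT F0 F1 mF t.
have [t0|t0] := ltrP t 0.
  apply/eqP; rewrite eq_le measure_ge0 andbT.
  rewrite -F0 -mF ?lexx ?ler01 //.
  apply: le_measure; rewrite ?inE //.
  by move=> x /=; rewrite !in_itv /= => h; apply: le_trans h (ltW t0).
have [t1|t1] := lerP t 1; first by rewrite mF // t0 t1.
apply/eqP; rewrite eq_le; apply/andP; split.
  by rewrite -mT; apply: le_measure; rewrite ?inE.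
rewrite -F1 -mF ?ler01 ?lexx //.
apply: le_measure; rewrite ?inE //.
by move=> x /=; rewrite !in_itv /= => h; apply: le_trans h (ltW t1).
Qed.

Lemma unique_rays (m1 m2 : {measure set R -> \bar R}) (F : R -> R) :
  m1 setT = 1%E -> m2 setT = 1%E -> F 0 = 0 -> F 1 = 1 ->
  (forall t, 0 <= t <= 1 -> m1 `]-oo, t]%classic = (F t)%:E) ->
  (forall t, 0 <= t <= 1 -> m2 `]-oo, t]%classic = (F t)%:E) ->
  forall A, measurable A -> m1 A = m2 A.
Proof.
move=> m1T m2T F0 F1 h1 h2.
have r1 := @ray_ext m1 F m1T F0 F1 h1.
have r2 := @ray_ext m2 F m2T F0 F1 h2.
have fin (m : {measure set R -> \bar R}) : m setT = 1%E ->
    forall A, measurable A -> (m A < +oo)%E.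
  move=> mT A mA; apply: (@le_lt_trans _ _ (m setT)); last by rewrite mT ltry.
  by apply: le_measure; rewrite ?inE.
have setE a b : `]a, b]%classic = `]-oo, b]%classic `\` `]-oo, a]%classic :> set R.
  apply/seteqP; split=> x /=; rewrite !in_itv /= ?andbT.
    by move=> /andP[ax xb]; split => //; apply/negP; rewrite -ltNge.
  by move=> [xb /negP]; rewrite -ltNge => ax; rewrite ax xb.
have setI a b : `]-oo, b]%classic `&` `]-oo, a]%classic = `]-oo, Num.min a b]%classic :> set R.
  by apply/seteqP; split=> x /=; rewrite !in_itv /= le_min; [move=> [-> ->]|move=> /andP[]].
apply: (measure_unique (@ocitv R) (fun n : nat => `]-(n%:R), n%:R]%classic)).
- by [].
- exact: ocitvI.
- by move=> n; exact: is_ocitv.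
- apply/seteqP; split=> // x _.
  exists (Num.trunc `|x|).+1 => //=; rewrite in_itv /=.
  have := Num.Theory.truncnS_gt (`|x|).
  by rewrite ltr_norml => /andP[-> /ltW ->].
- move=> _ [[a b] _ <-] /=.
  rewrite setE !measureD //; try exact: fin.
  rewrite !setI.
  have e t : m1 `]-oo, t]%classic = m2 `]-oo, t]%classic by rewrite r1 r2.
  exact: (congr2 (fun u v => (u - v)%E) (e b) (e _)).
- by move=> k; apply: fin.
Qed.

Lemma mhorner (p : {poly R}) : measurable_fun setT (fun x => (p.[x])%:E).
Proof.
apply/measurable_EFinP; apply: continuous_measurable_fun.
exact: continuous_horner.
Qed.

Lemma int_poly_cc (p : {poly R}) (a b : R) : a <= b ->
  (\int[mu]_(x in `[a, b]) (p^`().[x])%:E = (p.[b] - p.[a])%:E)%E.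
Proof.
rewrite le_eqVlt => /predU1P[<-|ab]; last exact: ftc_poly.
by rewrite set_itv1 integral_set1 subrr.
Qed.

Lemma int_poly_oc (p : {poly R}) (a b : R) : a <= b ->
  (\int[mu]_(x in `]a, b]) (p^`().[x])%:E = (p.[b] - p.[a])%:E)%E.
Proof.
move=> ab; rewrite integral_itv_obnd_cbnd ?int_poly_cc //.
exact: measurable_funTS (mhorner _).
Qed.

Lemma ray01 (t : R) : 0 <= t <= 1 ->
  `]-oo, t]%classic `&` `[0%R, 1%R]%classic = `[0%R, t]%classic :> set R.
Proof.
move=> /andP[t0 t1]; apply/seteqP; split=> x /=; rewrite !in_itv /=.
  by move=> [xt /andP[-> _]].
move=> /andP[x0 xt]; split => //; rewrite x0 /=; exact: le_trans xt t1.
Qed.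

Lemma dens_ray (p : {poly R}) (t : R) : 0 <= t <= 1 ->
  (\int[mu]_(x in `]-oo, t]%classic `&` `[0%R, 1%R]) (p^`().[x])%:E =
     (p.[t] - p.[0])%:E)%E.
Proof. by move=> ht; rewrite ray01 // int_poly_cc //; case/andP: ht. Qed.

Lemma dens_T (p : {poly R}) :
  (\int[mu]_(x in [set: R] `&` `[0%R, 1%R]) (p^`().[x])%:E =
     (p.[1] - p.[0])%:E)%E.
Proof. by rewrite setTI int_poly_cc // ler01. Qed.

Lemma unif01E (A : set R) :
  @unif01 R A = (\int[mu]_(x in A `&` `[0%R, 1%R]) (('X : {poly R})^`().[x])%:E)%E.
Proof.
rewrite /unif01 /uniform_prob integral_uniform_pdf; apply: eq_integral.
move=> x; rewrite inE => -[_]; rewrite /= in_itv /= => h.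
by rewrite /uniform_pdf h derivX hornerC subr0 invr1.
Qed.

Lemma unif_ray (t : R) : 0 <= t <= 1 -> @unif01 R `]-oo, t]%classic = t%:E.
Proof. by move=> ht; rewrite unif01E dens_ray // !hornerX subr0. Qed.

Lemma unif_rayo (t : R) : 0 <= t <= 1 -> @unif01 R `]t, +oo[%classic = (1 - t)%:E.
Proof.
move=> ht; rewrite -setCitvl [LHS](@probability_setC _ _ R (uniform_prob (@ltr01 R))) //.
by rewrite EFinB; congr (_ - _)%E; exact: unif_ray.
Qed.


Section pf.
Variable w : R * R * R -> R.
Definition pf (_ : measurable_fun setT w) (A : set R) : \bar R :=
  @unif3 R (w @^-1` A).
Variable mw : measurable_fun setT w.

Let pf0 : pf mw set0 = 0%E.
Proof. by rewrite /pf preimage_set0; exact: measure0. Qed.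

Let pf_ge0 A : (0 <= pf mw A)%E.
Proof. exact: measure_ge0. Qed.

Let pf_sigma_additive : semi_sigma_additive (pf mw).
Proof.
move=> F mF tF mUF; rewrite /pf preimage_bigcup.
apply: measure_semi_sigma_additive.
- by move=> n; rewrite -[X in measurable X]setTI; exact: mw.
- apply/trivIsetP => /= i j _ _ ij; rewrite -preimage_setI.
  by move/trivIsetP : tF => /(_ _ _ _ _ ij) ->//; rewrite preimage_set0.
- by rewrite -preimage_bigcup -[X in measurable X]setTI; exact: mw.
Qed.

HB.instance Definition _ := isMeasure.Build _ _ _
  (pf mw) pf0 pf_ge0 pf_sigma_additive.
End pf.

Definition p1 (p : R * R * R) := p.1.1.
Definition p2 (p : R * R * R) := p.1.2.
Definition p3 (p : R * R * R) := p.2.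
Lemma mp1 : measurable_fun setT p1.
Proof. exact: measurableT_comp measurable_fst measurable_fst. Qed.
Lemma mp2 : measurable_fun setT p2.
Proof. exact: measurableT_comp measurable_snd measurable_fst. Qed.
Lemma mp3 : measurable_fun setT p3.
Proof. exact: measurable_snd. Qed.

Definition med := (p1 \min p2) \max ((p1 \max p2) \min p3).

Lemma mmed : measurable_fun setT med.
Proof.
apply: measurable_maxr; apply: measurable_minr; rewrite ?[in X in measurable_fun _ X]/=;
  try apply: measurable_maxr; (exact: mp1 || exact: mp2 || exact: mp3).
Qed.

Lemma tw_med : triadic_winner (R:=R) = med.
Proof.
apply/funext => -[[x y] z]; rewrite /triadic_winner /med /p1 /p2 /p3 /=.
rewrite (distrC y x) (distrC z x) (distrC z y).
case: (lerP x y) => ?; case: (lerP x z) => ?; case: (lerP y z) => ?;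
repeat match goal with |- context [(?a <= ?b)%R] =>
  case: (lerP a b) => ? /= end;
try done;
repeat match goal with |- context [Num.max ?a ?b] =>
  case: (lerP a b) => ? /= end;
try done; lra.
Qed.

Lemma mtw : measurable_fun setT (triadic_winner (R:=R)).
Proof. by rewrite tw_med; exact: mmed. Qed.

Lemma med_le (x y z t : R) : (med (x, y, z) <= t) =
  [|| (x <= t) && (y <= t), ((x <= t) && (t < y) || (t < x) && (y <= t)) && (z <= t) | false].
Proof.
rewrite /med /p1 /p2 /p3 /= ge_max !ge_min ge_max.
by case: (lerP x t); case: (lerP y t); case: (lerP z t).
Qed.

Definition m12 := (@unif01 R \x @unif01 R)%E.

Lemma u3X (A : set (R * R)) (B : set R) : measurable A -> measurable B ->
  @unif3 R (A `*` B) = (m12 A * @unif01 R B)%E.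
Proof. by move=> mA mB; rewrite /unif3 /m12 product_measure1E. Qed.

Lemma u12X (A B : set R) : measurable A -> measurable B ->
  m12 (A `*` B) = (@unif01 R A * @unif01 R B)%E.
Proof. by move=> mA mB; rewrite /m12 product_measure1E. Qed.

Lemma u3U (A B : set (R * R * R)) : measurable A -> measurable B ->
  A `&` B = set0 -> @unif3 R (A `|` B) = (@unif3 R A + @unif3 R B)%E.
Proof. by move=> mA mB AB; rewrite /unif3 measureU. Qed.

Lemma u12U (A B : set (R * R)) : measurable A -> measurable B ->
  A `&` B = set0 -> m12 (A `|` B) = (m12 A + m12 B)%E.
Proof. by move=> mA mB AB; rewrite /m12 measureU. Qed.

Lemma u1T : @unif01 R setT = 1%E.
Proof. exact: probability_setT. Qed.

Definition PT : {poly R} := 3 *: 'X^2 - 2 *: 'X^3.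

Lemma tw_ray (t : R) : 0 <= t <= 1 ->
  pf _ mtw `]-oo, t]%classic = (PT.[t] - PT.[0])%:E.
Proof.
move=> ht; rewrite /pf.
set L := `]-oo, t]%classic : set R.
set U := `]t, +oo[%classic : set R.
have -> : triadic_winner (R:=R) @^-1` L =
   ((L `*` L) `*` setT) `|` (((L `*` U) `|` (U `*` L)) `*` L).
  rewrite tw_med; apply/seteqP; split => -[[x y] z];
  rewrite /L /U /= !in_itv /= => /=; rewrite med_le /= orbF !andbT;
  case: (lerP x t) => ?; case: (lerP y t) => ?; case: (lerP z t) => ? /=;
  intuition.
have mL : measurable L by exact: measurable_itv.
have mU : measurable U by exact: measurable_itv.
have dLU : L `&` U = set0.
  apply/seteqP; split => // x []; rewrite /L /U /= !in_itv /= andbT => h1 h2.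
  by move: (le_lt_trans h1 h2); rewrite ltxx.
have dXY (T1 T2 : Type) (A C : set T1) (B D : set T2) : A `&` C = set0 -> (A `*` B) `&` (C `*` D) = set0.
  move=> h; apply/seteqP; split => // -[a b] [[/= ? ?] [/= ? ?]].
  by have : (A `&` C) a by []; rewrite h.
have dXY2 (T1 T2 : Type) (A C : set T1) (B D : set T2) : B `&` D = set0 -> (A `*` B) `&` (C `*` D) = set0.
  move=> h; apply/seteqP; split => // -[a b] [[/= ? ?] [/= ? ?]].
  by have : (B `&` D) b by []; rewrite h.
have dLU' : U `&` L = set0 by rewrite setIC.
have dLL : (L `*` L) `&` ((L `*` U) `|` (U `*` L)) = set0.
  by rewrite setIUr (dXY2 _ _ _ _ _ _ dLU) (dXY _ _ _ _ _ _ dLU) setU0.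
rewrite u3U; try exact: dXY; try by repeat first [exact: mL | exact: mU | exact: measurableT | apply: measurableX | apply: measurableU].
rewrite !u3X; try by repeat first [exact: mL | exact: mU | exact: measurableT | apply: measurableX | apply: measurableU].
rewrite u12U; try exact: dXY; try by repeat first [exact: mL | exact: mU | exact: measurableT | apply: measurableX | apply: measurableU].
rewrite !u12X // u1T !unif_ray // unif_rayo //.
rewrite /PT !(hornerD, hornerN, hornerZ, hornerXn) -!EFinM -!EFinD; congr (_%:E); ring.
Qed.

Lemma PT_E : (fun x : R => 6 * x * (1 - x)) = horner PT^`().
Proof.
apply/funext => x; rewrite /PT derivB !derivZ !derivXn /=.
rewrite !(hornerD, hornerN, hornerZ, hornerXn, hornerMn) /=.
ring.
Qed.

Lemma u3T : @unif3 R setT = 1%E.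
Proof.
have -> : (setT : set (R * R * R)) = ((setT : set R) `*` (setT : set R)) `*` (setT : set R).
  by rewrite !setXTT.
rewrite u3X ?u12X ?u1T ?mule1 //; exact: measurableX.
Qed.

Lemma dens_eq (g : R -> R) (p : {poly R}) (mg : measurable_fun setT g)
  (g0 : forall x, 0 <= x <= 1 -> 0 <= g x) :
  g = horner p^`() -> 
  (dens _ mg g0 setT = (p.[1] - p.[0])%:E) /\
  (forall t, 0 <= t <= 1 -> dens _ mg g0 `]-oo, t]%classic = (p.[t] - p.[0])%:E).
Proof.
move=> gE; split; first by rewrite /dens gE dens_T.
by move=> t ht; rewrite /dens gE dens_ray.
Qed.

Lemma part1 : forall A : set R, measurable A ->
     @unif3 R (triadic_winner (R:=R) @^-1` A) =
     (\int[lebesgue_measure]_(x in A `&` `[0%R, 1%R]) (6 * x * (1 - x))%:E)%E.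
Proof.
have mg : measurable_fun setT (fun x : R => 6 * x * (1 - x)).
  by rewrite PT_E; apply: continuous_measurable_fun; exact: continuous_horner.
have g0 : forall x : R, 0 <= x <= 1 -> 0 <= 6 * x * (1 - x).
  by move=> x /andP[x0 x1]; rewrite mulr_ge0 ?mulr_ge0 // subr_ge0.
have [dT dR] := dens_eq _ _ mg g0 PT_E.
have P1 : PT.[1] - PT.[0] = 1.
  by rewrite /PT !(hornerD, hornerN, hornerZ, hornerXn) !expr1n !expr0n /=; lra.
move=> A mA.
have := @unique_rays (pf _ mtw) (dens _ mg g0) (fun t => PT.[t] - PT.[0]).
move=> /(_ _ _ _ _ tw_ray dR A mA); apply.
- exact: u3T.
- by apply: (eq_trans dT); rewrite P1.
- by rewrite subrr.
- exact: P1.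
Qed.
End S.

Section S2.
Variable R : realType.
Local Notation mu := (@lebesgue_measure R).

Lemma hw_E : hotornot_winner (R:=R) =
  fun p => if `|p3 _ p - p1 _ p| <= `|p3 _ p - p2 _ p| then p1 _ p else p2 _ p.
Proof. by apply/funext => -[[x y] z]. Qed.

Lemma mhw : measurable_fun setT (hotornot_winner (R:=R)).
Proof.
rewrite hw_E; apply: measurable_fun_if => //.
- apply: measurable_fun_ler; apply: measurableT_comp => //;
  apply: measurable_funB; (exact: mp1 || exact: mp2 || exact: mp3).
- exact: measurable_funTS (@mp1 R).
- exact: measurable_funTS (@mp2 R).
Qed.

Lemma unif_rayoo (t : R) : 0 <= t <= 1 -> @unif01 R `]-oo, t[%classic = t%:E.
Proof.
move=> /andP[t0 t1]; rewrite unif01E.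
have -> : `]-oo, t[%classic `&` `[0%R, 1%R]%classic = `[0%R, t[%classic :> set R.
  apply/seteqP; split=> x /=; rewrite !in_itv /=.
    by move=> [xt /andP[-> _]].
  move=> /andP[x0 xt]; split => //; rewrite x0 /=; exact: ltW (lt_le_trans xt t1).
rewrite integral_itv_bndo_bndc; last exact: measurable_funTS (mhorner _ _).
by rewrite int_poly_cc // !hornerX subr0.
Qed.

Lemma sec_eq (t x y : R) :
  xsection (hotornot_winner (R:=R) @^-1` `]-oo, t]%classic) (x, y) =
  [set z | (if `|z - x| <= `|z - y| then x else y) <= t].
Proof.
apply/seteqP; split => z; rewrite /xsection /= inE /= in_itv /= //.
Qed.

Definition psi (t x y : R) : R :=
  if x <= t then (if y <= t then 1 else (x + y) / 2)
  else (if y <= t then (x + y) / 2 else 0).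

Lemma sec_val (t x y : R) : 0 <= x <= 1 -> 0 <= y <= 1 ->
  @unif01 R (xsection (hotornot_winner (R:=R) @^-1` `]-oo, t]%classic) (x, y))
  = (psi t x y)%:E.
Proof.
move=> /andP[x0 x1] /andP[y0 y1]; rewrite sec_eq /psi.
have s01 : 0 <= (x + y) / 2 <= 1 by apply/andP; split; lra.
case: (lerP x t) => xt; case: (lerP y t) => yt.
- rewrite -u1T; congr (unif01 _); apply/seteqP; split => // z _ /=.
  by case: ifP.
- rewrite -unif_ray //; congr (unif01 _); apply/seteqP; split => z /=;
  rewrite in_itv /=;
  case: (lerP z x) => ?; case: (lerP z y) => ?;
  repeat match goal with |- context [(?a <= ?b)%R] =>
    lazymatch b with t => fail | _ => case: (lerP a b) => ? /= end end;
  try done; try lra.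
- rewrite -unif_rayoo //; congr (unif01 _); apply/seteqP; split => z /=;
  rewrite in_itv /=;
  case: (lerP z x) => ?; case: (lerP z y) => ?;
  repeat match goal with |- context [(?a <= ?b)%R] =>
    lazymatch b with t => fail | _ => case: (lerP a b) => ? /= end end;
  repeat match goal with |- context [(?a < ?b)%R] =>
    case: (ltrP a b) => ? /= end;
  try done; try lra.
- have -> : [set z | (if `|z - x| <= `|z - y| then x else y) <= t] = set0.
    apply/seteqP; split => // z /=; case: ifP => _ h; lra.
  exact: measure0.
Qed.

Lemma int2 (phi : R * R -> \bar R) : measurable_fun setT phi ->
  (forall q, 0 <= phi q)%E ->
  (\int[m12 R]_q phi q =
   \int[mu]_(x in `[0%R, 1%R]) \int[mu]_(y in `[0%R, 1%R]) phi (x, y))%E.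
Proof.
move=> mphi phi0.
rewrite /m12 fubini_tonelli1 // integral_uniform //=; first last.
- by move=> x; apply: integral_ge0.
- exact: measurable_fun_fubini_tonelli_F.
rewrite subr0 invr1 mul1e; apply: eq_integral => x _.
rewrite /fubini_F integral_uniform //= ?subr0 ?invr1 ?mul1e //.
exact: measurable_fun_pair2.
Qed.

Lemma mG (phi : R * R -> \bar R) : measurable_fun setT phi ->
  (forall q, 0 <= phi q)%E ->
  measurable_fun setT (fun x => \int[mu]_(y in `[0%R, 1%R]) phi (x, y))%E.
Proof.
move=> mphi phi0.
have -> : (fun x => \int[mu]_(y in `[0%R, 1%R]) phi (x, y))%E =
  fubini_F (@unif01 R) phi.
  apply/funext => x; rewrite /fubini_F integral_uniform //= ?subr0 ?invr1 ?mul1e //.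
  exact: measurable_fun_pair2.
exact: measurable_fun_fubini_tonelli_F.
Qed.

Lemma split01 (f : R -> \bar R) (t : R) : 0 <= t <= 1 ->
  measurable_fun setT f -> (forall x, 0 <= f x)%E ->
  (\int[mu]_(x in `[0%R, 1%R]) f x =
   \int[mu]_(x in `[0%R, t]) f x + \int[mu]_(x in `]t, 1%R]) f x)%E.
Proof.
move=> /andP[t0 t1] mf f0.
have -> : `[0%R, 1%R]%classic = `[0%R, t]%classic `|` `]t, 1%R]%classic :> set R.
  apply/seteqP; split => x /=; rewrite !in_itv /=.
    move=> /andP[x0 x1]; case: (lerP x t) => xt; [left|right]; apply/andP; split => //.
  case=> /andP[h1 h2]; apply/andP; split => //; try lra.
rewrite ge0_integral_setU //.
- exact: measurable_funTS.
- apply/disj_setPS => x [] /=; rewrite !in_itv /= => /andP[_ h1] /andP[h2 _]; lra.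
Qed.

Definition Qx (x : R) : {poly R} := (x / 2) *: 'X + (1 / 4) *: 'X^2.
Definition K1 (t : R) : {poly R} := (t + (1 - t ^+ 2) / 4) *: 'X + ((1 - t) / 4) *: 'X^2.
Definition K2 (t : R) : {poly R} := (t ^+ 2 / 4) *: 'X + (t / 4) *: 'X^2.
Definition PH : {poly R} := (1 / 2) *: 'X + (3 / 2) *: 'X^2 - 'X^3.

Lemma dpoly (a b y : R) : ((a *: 'X + b *: 'X^2 : {poly R})^`()).[y] = a + 2 * b * y.
Proof.
rewrite derivD !derivZ derivX derivXn !(hornerD, hornerZ, hornerC, hornerMn, hornerX).
ring.
Qed.

Lemma epoly (a b y : R) : (a *: 'X + b *: 'X^2 : {poly R}).[y] = a * y + b * y ^+ 2.
Proof. by rewrite !(hornerD, hornerZ, hornerX, hornerXn). Qed.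

Lemma hw_ray (t : R) : 0 <= t <= 1 ->
  pf _ _ mhw `]-oo, t]%classic = (PH.[t] - PH.[0])%:E.
Proof.
move=> ht; rewrite /pf.
set S := hotornot_winner (R:=R) @^-1` `]-oo, t]%classic.
have mS : measurable S.
  by rewrite /S -[X in measurable X]setTI; apply: mhw => //; exact: measurable_itv.
set phi := fun q => @unif01 R (xsection S q).
have mphi : measurable_fun setT phi by exact: measurable_fun_xsection.
have phi0 : forall q, (0 <= phi q)%E by move=> q; exact: measure_ge0.
change (\int[m12 R]_q phi q = (PH.[t] - PH.[0])%:E)%E.
rewrite int2 // (@split01 _ t ht); first last.
- by move=> x; apply: integral_ge0.
- exact: mG.
have /andP[t0 t1] := ht.
have mphi2 x : measurable_fun setT (fun y => phi (x, y)) by exact: measurable_fun_pair2.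
have e1 : (\int[mu]_(x in `[0%R, t]) \int[mu]_(y in `[0%R, 1%R]) phi (x, y) =
    ((K1 t).[t] - (K1 t).[0])%:E)%E.
  rewrite -int_poly_cc //; apply: eq_integral => x; rewrite inE /= in_itv /=.
  move=> /andP[x0 xt].
  rewrite (@split01 _ t ht) //.
  have -> : (\int[mu]_(y in `[0%R, t]) phi (x, y) =
      \int[mu]_(y in `[0%R, t]) ((('X : {poly R})^`()).[y])%:E)%E.
    apply: eq_integral => y; rewrite inE /= in_itv /= => /andP[y0 yt].
    rewrite /phi sec_val ?derivX ?hornerC /psi ?xt ?yt //; apply/andP; split; lra.
  have -> : (\int[mu]_(y in `]t, 1%R]) phi (x, y) =
      \int[mu]_(y in `]t, 1%R]) (((Qx x)^`()).[y])%:E)%E.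
    apply: eq_integral => y; rewrite inE /= in_itv /= => /andP[ty y1].
    rewrite /phi sec_val /psi ?xt; last 2 first.
    - apply/andP; split; lra.
    - apply/andP; split; lra.
    rewrite leNgt ty /= /Qx dpoly; by congr (_%:E); field.
  all: try done.
  rewrite int_poly_cc // int_poly_oc // -EFinD /Qx /K1 dpoly !epoly !hornerX.
  by congr (_%:E); field.
have e2 : (\int[mu]_(x in `]t, 1%R]) \int[mu]_(y in `[0%R, 1%R]) phi (x, y) =
    ((K2 t).[1] - (K2 t).[t])%:E)%E.
  rewrite -int_poly_oc //; apply: eq_integral => x; rewrite inE /= in_itv /=.
  move=> /andP[tx x1].
  rewrite (@split01 _ t ht) //.
  have -> : (\int[mu]_(y in `[0%R, t]) phi (x, y) =
      \int[mu]_(y in `[0%R, t]) (((Qx x)^`()).[y])%:E)%E.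
    apply: eq_integral => y; rewrite inE /= in_itv /= => /andP[y0 yt].
    rewrite /phi sec_val /psi ?yt; last 2 first.
    - apply/andP; split; lra.
    - apply/andP; split; lra.
    rewrite leNgt tx /= /Qx dpoly; by congr (_%:E); field.
  have -> : (\int[mu]_(y in `]t, 1%R]) phi (x, y) =
      \int[mu]_(y in `]t, 1%R]) 0)%E.
    apply: eq_integral => y; rewrite inE /= in_itv /= => /andP[ty y1].
    rewrite /phi sec_val /psi; last 2 first.
    - apply/andP; split; lra.
    - apply/andP; split; lra.
    by rewrite leNgt tx leNgt ty.
  rewrite integral0 adde0 int_poly_cc // /Qx /K2 dpoly !epoly.
  by congr (_%:E); field.
rewrite e1 e2 -EFinD /K1 /K2 /PH !epoly !(hornerD, hornerN, hornerZ, hornerX, hornerXn).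
by congr (_%:E); field.
Qed.

Lemma PH_E : (fun x : R => 3 * x * (1 - x) + 2^-1) = horner PH^`().
Proof.
apply/funext => x; rewrite /PH derivB derivD !derivZ derivX !derivXn.
rewrite !(hornerD, hornerN, hornerZ, hornerXn, hornerMn, hornerX, hornerC) /=.
by field.
Qed.

Lemma part2 : forall A : set R, measurable A ->
     @unif3 R (hotornot_winner (R:=R) @^-1` A) =
     (\int[lebesgue_measure]_(x in A `&` `[0%R, 1%R]) (3 * x * (1 - x) + 2^-1)%:E)%E.
Proof.
have mg : measurable_fun setT (fun x : R => 3 * x * (1 - x) + 2^-1).
  by rewrite PH_E; apply: continuous_measurable_fun; exact: continuous_horner.
have g0 : forall x : R, 0 <= x <= 1 -> 0 <= 3 * x * (1 - x) + 2^-1.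
  move=> x /andP[x0 x1]; apply: addr_ge0; last by rewrite invr_ge0.
  by rewrite mulr_ge0 ?mulr_ge0 // subr_ge0.
have [dT dR] := dens_eq _ _ _ mg g0 PH_E.
have P1 : PH.[1] - PH.[0] = 1.
  rewrite /PH !(hornerD, hornerN, hornerZ, hornerXn, hornerX) !expr1n !expr0n /=.
  by field.
move=> A mA.
have := @unique_rays R (pf _ _ mhw) (dens _ _ mg g0) (fun t => PH.[t] - PH.[0]).
move=> /(_ _ _ _ _ hw_ray dR A mA); apply.
- exact: u3T.
- by apply: (eq_trans dT); rewrite P1.
- by rewrite subrr.
- exact: P1.
Qed.
End S2.

Theorem theorem1 (R : realType) :
  (forall A : set R, measurable A ->
     @unif3 R (triadic_winner (R:=R) @^-1` A) =
     (\int[lebesgue_measure]_(x in A `&` `[0%R, 1%R]) (6 * x * (1 - x))%:E)%E) /\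
  (forall A : set R, measurable A ->
     @unif3 R (hotornot_winner (R:=R) @^-1` A) =
     (\int[lebesgue_measure]_(x in A `&` `[0%R, 1%R]) (3 * x * (1 - x) + 2^-1)%:E)%E) /\
  (forall x : R, 0 <= x <= 1 ->
     3 * x * (1 - x) + 2^-1 = 2^-1 * (6 * x * (1 - x)) + 2^-1 * uniform_pdf 0 1 x).
Proof.
split; first exact: part1.
split; first exact: part2.
move=> x hx; rewrite /uniform_pdf hx subr0 invr1; by field.
Qed.
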